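(* Let $A\neq 1$ and $B\neq 0$ be real constants and let $(x_n)_{n\ge0}$ be the solution of $$x_{n+10}=\frac{x_n}{A+B\,x_nx_{n+2}x_{n+4}x_{n+6}x_{n+8}},\qquad n\ge 0,$$ with initial conditions $x_0,\dots,x_9$. Suppose the initial conditions satisfy $x_ix_{i+2}x_{i+4}x_{i+6}x_{i+8}=\frac{1-A}{B}$ for $i=0,1$, and $x_i\neq x_{i+2}$, $x_i\neq x_{i+5}$ (for those indices $i$ with the terms among $x_0,\dots,x_9$). Then the solution is periodic with period $10$. *)

(* Defs.v *)
From Stdlib Require Import Reals.
Open Scope R_scope.

Definition is_solution (A B : R) (x : nat -> R) : Prop :=
  forall n : nat,
    x (n + 10)%nat =
      x n / (A + B * (x n * x (n + 2)%nat * x (n + 4)%nat * x (n + 6)%nat * x (n + 8)%nat)).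

Definition periodic_with (p : nat) (x : nat -> R) : Prop :=
  forall n : nat, x (n + p)%nat = x n.

Definition prime_period (p : nat) (x : nat -> R) : Prop :=
  (0 < p)%nat /\ periodic_with p x /\
  forall q : nat, (0 < q < p)%nat -> ~ periodic_with q x.

(* Main.v *)
Require Import Defs.
From Stdlib Require Import Reals Lra Lia.
Open Scope R_scope.

Theorem theorem2 (A B : R) (x : nat -> R)
  (hA : A <> 1) (hB : B <> 0)
  (hsol : is_solution A B x)
  (hinit : forall i : nat, (i <= 1)%nat ->
     x i * x (i + 2)%nat * x (i + 4)%nat * x (i + 6)%nat * x (i + 8)%nat = (1 - A) / B)
  (hne2 : forall i : nat, (i + 2 <= 9)%nat -> x i <> x (i + 2)%nat)
  (hne5 : forall i : nat, (i + 5 <= 9)%nat -> x i <> x (i + 5)%nat) :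
  prime_period 10 x.
Proof.
  set (c := (1 - A) / B).
  set (P := fun n => x n * x (n + 2)%nat * x (n + 4)%nat * x (n + 6)%nat * x (n + 8)%nat).
  assert (hc : A + B * c = 1) by (unfold c; field; auto).
  assert (step : forall n, P n = c -> x (n + 10)%nat = x n).
  { intros n Hn. rewrite hsol. change (x n / (A + B * P n) = x n).
    rewrite Hn, hc. field. }
  assert (all : forall n, P n = c /\ P (S n) = c).
  { induction n as [|n [IH1 IH2]].
    - split; [apply (hinit 0%nat) | apply (hinit 1%nat)]; lia.
    - split; [exact IH2|].
      assert (E := step n IH1).
      unfold P in *.
      replace (S (S n)) with (n + 2)%nat by lia.
      replace (n + 2 + 2)%nat with (n + 4)%nat by lia.
      replace (n + 2 + 4)%nat with (n + 6)%nat by lia.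
      replace (n + 2 + 6)%nat with (n + 8)%nat by lia.
      replace (n + 2 + 8)%nat with (n + 10)%nat by lia.
      rewrite E. rewrite <- IH1. ring. }
  assert (per : forall n, x (n + 10)%nat = x n) by (intro n; apply step, all).
  split; [lia|]. split; [exact per|].
  intros q Hq hq. unfold periodic_with in hq.
  assert (h2 := hne2 0%nat ltac:(lia)). assert (h5 := hne5 0%nat ltac:(lia)).
  assert (h6 := hne2 6%nat ltac:(lia)).
  simpl in h2, h5, h6.
  assert (p2 := per 2%nat). assert (p6 := per 6%nat). simpl in p2, p6.
  destruct q as [|[|[|[|[|[|[|[|[|[|q]]]]]]]]]]; try lia.
  - pose proof (hq 0%nat); pose proof (hq 1%nat); simpl in *; congruence.
  - pose proof (hq 0%nat); simpl in *; congruence.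
  - pose proof (hq 0%nat); pose proof (hq 3%nat); pose proof (hq 6%nat);
    pose proof (hq 9%nat); simpl in *; congruence.
  - pose proof (hq 0%nat); pose proof (hq 4%nat); pose proof (hq 8%nat); simpl in *; congruence.
  - pose proof (hq 0%nat); simpl in *; congruence.
  - pose proof (hq 0%nat); pose proof (hq 6%nat); simpl in *; congruence.
  - assert (h3 : forall n, x (n + 3)%nat = x n).
    { intro n. rewrite <- (hq (n+3)%nat). replace (n + 3 + 7)%nat with (n + 10)%nat by lia.
      apply per. }
    pose proof (h3 0%nat); pose proof (h3 3%nat); pose proof (h3 6%nat);
    pose proof (h3 9%nat); simpl in *; congruence.
  - pose proof (hq 0%nat); pose proof (hq 8%nat); pose proof (per 6%nat); simpl in *; congruence.
  - assert (h1 : forall n, x (n + 1)%nat = x n).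
    { intro n. rewrite <- (hq (n+1)%nat). replace (n + 1 + 9)%nat with (n + 10)%nat by lia.
      apply per. }
    pose proof (h1 0%nat); pose proof (h1 1%nat); simpl in *; congruence.
Qed.
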